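(* The set $V:=\{\alpha\in\ell^\infty_w:\ G_{\tilde\psi,\psi}\alpha=\alpha\}$ is a closed subspace of $\ell^\infty_w$. Consequently, $(\mathcal H^\infty_w,\|\cdot\|_{\mathcal H^\infty_w})$ is a Banach space.
   Context: Standing setting. $\mathcal H$ is a separable complex Hilbert space with inner product $\langle\cdot,\cdot\rangle$, linear in the first and conjugate-linear in the second argument. $X$ is a countable index set. A weight is a map $w:X\to(0,\infty)$; $\ell^\infty_w$ is the Banach space of sequences $\alpha=(\alpha_k)_{k\in X}$ with $\|\alpha\|_{\ell^\infty_w}:=\sup_{k\in X}|\alpha_k|w(k)<\infty$. $\psi=(\psi_k)_{k\in X}$ is a frame for $\mathcal H$ and $\tilde\psi=(\tilde\psi_k)_{k\in X}$ is a dual frame, i.e. $f=\sum_{k}\langle f,\tilde\psi_k\rangle\psi_k=\sum_k\langle f,\psi_k\rangle\tilde\psi_k$ for all $f\in\mathcal H$ (unconditional convergence in $\mathcal H$). The cross Gram matrix $G_{\tilde\psi,\psi}$ has entries $(G_{\tilde\psi,\psi})_{k,l}=\langle\psi_l,\tilde\psi_k\rangle$ and acts by $(G_{\tilde\psi,\psi}\alpha)_k=\sum_{l\in X}\langle\psi_l,\tilde\psi_k\rangle\alpha_l$; it is assumed to define a bounded operator on $\ell^\infty_w$, meaning these series converge absolutely for every $\alpha\in\ell^\infty_w$ and $G_{\tilde\psi,\psi}:\ell^\infty_w\to\ell^\infty_w$ is bounded (equivalently $\|G_{\tilde\psi,\psi}\|_{\mathcal B(\ell^\infty_w)}=\sup_{k}\sum_{l}|\langle\psi_l,\tilde\psi_k\rangle|\,w(k)/w(l)<\infty$).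 Let $\mathcal H^{00}:=\operatorname{span}\{\tilde\psi_k:k\in X\}$ (finite linear combinations), a dense subspace of $\mathcal H$. Equip $\mathcal H$ with the locally convex topology $\sigma(\mathcal H,\mathcal H^{00})$ generated by the seminorms $f\mapsto|\langle f,v\rangle|$, $v\in\mathcal H^{00}$ (Hausdorff and metrizable). Let $\overline{\mathcal H}$ be the completion of $\mathcal H$ in this topology, with $\mathcal H\subseteq\overline{\mathcal H}$, and for each $v\in\mathcal H^{00}$ let $f\mapsto\langle f,v\rangle_{\overline{\mathcal H},\mathcal H^{00}}$ be the unique continuous linear extension of $f\mapsto\langle f,v\rangle$ to $\overline{\mathcal H}$. Define $\mathcal H^\infty_w$ as the set of all $f\in\overline{\mathcal H}$ for which there is a sequence $(f_n)_{n\ge1}\subseteq\mathcal H$ converging to $f$ in $\sigma(\overline{\mathcal H},\mathcal H^{00})$ (i.e. $\langle f_n,v\rangle\to\langle f,v\rangle_{\overline{\mathcal H},\mathcal H^{00}}$ for all $v\in\mathcal H^{00}$) with $\sup_{n\in\mathbb N,k\in X}|\langle f_n,\tilde\psi_k\rangle|w(k)<\infty$. The coefficient operator is $C_{\tilde\psi}:\mathcal H^\infty_w\to\ell^\infty_w$, $C_{\tilde\psi}f=(\langle f,\tilde\psi_k\rangle_{\overline{\mathcal H},\mathcal H^{00}})_{k\in X}$, and the norm on $\mathcal H^\infty_w$ is $\|f\|_{\mathcal H^\infty_w}:=\|C_{\tilde\psi}f\|_{\ell^\infty_w}$. *)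

(* Defs.v *)
From HB Require Import structures.
From mathcomp Require Import all_boot all_order all_algebra.
From mathcomp Require Import finmap.
From mathcomp Require Import classical_sets reals.
From mathcomp Require Import complex.
Set Implicit Arguments. Unset Strict Implicit. Unset Printing Implicit Defensive.
Import Order.TTheory GRing.Theory Num.Theory.
Local Open Scope ring_scope.
Local Open Scope complex_scope.

Section Defs.
Variable R : realType.
Local Notation C := R[i].

Definition cabs (z : C) : R := Normc.normc z.
Definition cconj (z : C) : C := z^*.

Section Hilbert.
Variable H : lmodType C.
Variable ip : H -> H -> C.

Definition is_inner_product : Prop :=
  [/\ forall a f g h, ip (a *: f + g) h = a * ip f h + ip g h,
      forall f g, ip g f = cconj (ip f g),
      forall f, (0 <= complex.Re (ip f f) /\ complex.Im (ip f f) = 0) &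
      forall f, ip f f = 0 -> f = 0].

Definition normH (f : H) : R := Num.sqrt (complex.Re (ip f f)).

Definition hilbert_complete : Prop :=
  forall u : nat -> H,
    (forall eps : R, 0 < eps -> exists N, forall n m, (N <= n)%N -> (N <= m)%N ->
       normH (u n - u m) < eps) ->
    exists f, forall eps : R, 0 < eps -> exists N, forall n, (N <= n)%N ->
       normH (u n - f) < eps.

Definition hilbert_separable : Prop :=
  exists d : nat -> H, forall f (eps : R), 0 < eps -> exists n, normH (f - d n) < eps.
End Hilbert.

(* ----- unconditional convergence of a series indexed by a countable set X:
   the net of finite partial sums (directed by inclusion) converges to s ----- *)
Definition uncond_sum (V : zmodType) (nrm : V -> R) (X : choiceType)
    (u : X -> V) (s : V) : Prop :=
  forall eps : R, 0 < eps -> exists F0 : {fset X}, forall F : {fset X},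
    fsubset F0 F -> nrm (s - \sum_(k <- F) u k) < eps.

Section Frames.
Variables (H : lmodType C) (ip : H -> H -> C) (X : countType).

(* frame: A ||f||^2 <= sum_k |<f,psi_k>|^2 <= B ||f||^2, the (possibly infinite)
   sum of nonnegative terms being the supremum of its finite partial sums *)
Definition is_frame (psi : X -> H) : Prop :=
  exists A B : R, [/\ 0 < A, 0 < B &
    forall f : H,
      (forall F : {fset X}, \sum_(k <- F) cabs (ip f (psi k)) ^+ 2 <= B * normH ip f ^+ 2)
   /\ (forall c : R, c < A * normH ip f ^+ 2 ->
        exists F : {fset X}, c < \sum_(k <- F) cabs (ip f (psi k)) ^+ 2)].

Definition is_dual_frame (psi tpsi : X -> H) : Prop :=
  is_frame tpsi /\
  forall f : H,
    uncond_sum (normH ip) (fun k => ip f (tpsi k) *: psi k) f /\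
    uncond_sum (normH ip) (fun k => ip f (psi k) *: tpsi k) f.

Definition gram (psi tpsi : X -> H) (k l : X) : C := ip (psi l) (tpsi k).

Definition ell_inf (w : X -> R) (a : X -> C) : Prop :=
  exists M : R, forall k, cabs (a k) * w k <= M.

Definition norm_ell_inf (w : X -> R) (a : X -> C) : R :=
  sup (range (fun k => cabs (a k) * w k)).

Definition gram_bounded (w : X -> R) (psi tpsi : X -> H) : Prop :=
  exists M : R, forall (k : X) (F : {fset X}),
    \sum_(l <- F) cabs (gram psi tpsi k l) * w k / w l <= M.

(* V = { a in l^infty_w : G a = a }, where (G a)_k = sum_l G_{k,l} a_l *)
Definition gram_fixed (w : X -> R) (psi tpsi : X -> H) (a : X -> C) : Prop :=
  ell_inf w a /\
  forall k, uncond_sum cabs (fun l => gram psi tpsi k l * a l) (a k).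

Definition closed_subspace_ell_inf (w : X -> R) (S : (X -> C) -> Prop) : Prop :=
  [/\ (forall a, S a -> ell_inf w a),
      S (fun _ => 0),
      (forall (c : C) a b, S a -> S b -> S (fun k => c * a k + b k)) &
      (forall (an : nat -> X -> C) (a : X -> C),
         (forall n, S (an n)) -> ell_inf w a ->
         (forall eps : R, 0 < eps -> exists N, forall n, (N <= n)%N ->
            norm_ell_inf w (fun k => an n k - a k) < eps) ->
         S a)].

Definition in_H00 (tpsi : X -> H) (v : H) : Prop :=
  exists (F : {fset X}) (c : X -> C), v = \sum_(k <- F) c k *: tpsi k.

Section Completion.
Variables (tpsi : X -> H) (Hb : lmodType C) (iota : H -> Hb) (pair : Hb -> H -> C).

Definition sigma_cvg (Fn : nat -> Hb) (F : Hb) : Prop :=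
  forall v, in_H00 tpsi v -> forall eps : R, 0 < eps ->
    exists N, forall n, (N <= n)%N -> cabs (pair (Fn n) v - pair F v) < eps.

Definition sigma_cauchy (Fn : nat -> Hb) : Prop :=
  forall v, in_H00 tpsi v -> forall eps : R, 0 < eps ->
    exists N, forall n m, (N <= n)%N -> (N <= m)%N ->
      cabs (pair (Fn n) v - pair (Fn m) v) < eps.

(* (Hb, iota, pair) is a completion of (H, sigma(H,H^00)):
   Hb is a vector space containing H (via the linear map iota), its topology is
   the weak topology induced by the functionals pair _ v (v in H^00), which are
   linear and extend <_, v>; Hb is Hausdorff, complete (it is metrizable, so
   sequential completeness suffices) and H is (sequentially) dense in it. *)
Definition is_sigma_completion : Prop :=
  [/\ forall (a : C) f g, iota (a *: f + g) = a *: iota f + iota g,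
      forall v, in_H00 tpsi v -> forall (a : C) F G,
        pair (a *: F + G) v = a * pair F v + pair G v,
      forall v f, in_H00 tpsi v -> pair (iota f) v = ip f v,
      forall F, (forall v, in_H00 tpsi v -> pair F v = 0) -> F = 0 &
      (forall F, exists fn : nat -> H, sigma_cvg (fun n => iota (fn n)) F) /\
      (forall Fn : nat -> Hb, sigma_cauchy Fn -> exists F, sigma_cvg Fn F)].

Definition Hinf (w : X -> R) (F : Hb) : Prop :=
  exists fn : nat -> H, sigma_cvg (fun n => iota (fn n)) F /\
    exists M : R, forall n k, cabs (ip (fn n) (tpsi k)) * w k <= M.

Definition coef_tpsi (F : Hb) : X -> C := fun k => pair F (tpsi k).

Definition norm_Hinf (w : X -> R) (F : Hb) : R := norm_ell_inf w (coef_tpsi F).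
End Completion.
End Frames.

Definition banach_subspace (V : lmodType C) (S : V -> Prop) (nrm : V -> R) : Prop :=
  [/\ S 0,
      (forall (a : C) f g, S f -> S g -> S (a *: f + g)),
      (forall f, S f -> nrm f = 0 -> f = 0) /\
      (forall (a : C) f, S f -> nrm (a *: f) = cabs a * nrm f),
      (forall f g, S f -> S g -> nrm (f + g) <= nrm f + nrm g) &
      (forall fn : nat -> V, (forall n, S (fn n)) ->
         (forall eps : R, 0 < eps -> exists N, forall n m, (N <= n)%N -> (N <= m)%N ->
            nrm (fn n - fn m) < eps) ->
         exists f, S f /\ forall eps : R, 0 < eps -> exists N, forall n, (N <= n)%N ->
            nrm (fn n - f) < eps)].
End Defs.

(* Main.v *)
Require Import Defs.
From HB Require Import structures.
From mathcomp Require Import all_boot all_order all_algebra.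
From mathcomp Require Import finmap.
From mathcomp Require Import classical_sets reals.
From mathcomp Require Import complex.
From mathcomp Require Import boolp.
From mathcomp Require Import ring lra.
Set Implicit Arguments. Unset Strict Implicit. Unset Printing Implicit Defensive.
Import Order.TTheory GRing.Theory Num.Theory.
Local Open Scope ring_scope.
Local Open Scope complex_scope.


Section Cabs.
Variable R : realType.
Implicit Types z : R[i].

Lemma cabsC z : (cabs z)%:C = `|z|.
Proof. by case: z. Qed.
Lemma cabs_ge0 z : 0 <= cabs z.
Proof. by case: z => a b; rewrite /cabs /= sqrtr_ge0. Qed.
Lemma cabs0 : cabs (0 : R[i]) = 0.
Proof. exact: Normc.normc0. Qed.
Lemma cabs_eq0 z : cabs z = 0 -> z = 0.
Proof. exact: Normc.eq0_normc. Qed.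
Lemma cabsM z1 z2 : cabs (z1 * z2) = cabs z1 * cabs z2.
Proof. exact: Normc.normcM. Qed.
Lemma cabsD z1 z2 : cabs (z1 + z2) <= cabs z1 + cabs z2.
Proof. exact: le_normcD. Qed.
Lemma cabsN z : cabs (- z) = cabs z.
Proof. exact: normcN. Qed.
Lemma cabsB z1 z2 : cabs (z1 - z2) = cabs (z2 - z1).
Proof. by rewrite -cabsN opprB. Qed.
Lemma cabsJ z : cabs (conjc z) = cabs z.
Proof. by case: z => a b; rewrite /cabs /= sqrrN. Qed.
End Cabs.



Section IP.
Variables (R : realType) (H : lmodType R[i]) (ip : H -> H -> R[i]).
Hypothesis hip : is_inner_product ip.

Lemma ipDZ a f g h : ip (a *: f + g) h = a * ip f h + ip g h.
Proof. by case: hip. Qed.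
Lemma ipJ f g : ip g f = conjc (ip f g).
Proof. by case: hip. Qed.
Lemma ip_pos f : 0 <= complex.Re (ip f f) /\ complex.Im (ip f f) = 0.
Proof. by case: hip => _ _ h _; exact: h. Qed.
Lemma ip_eq0 f : ip f f = 0 -> f = 0.
Proof. by case: hip => _ _ _ h; exact: h. Qed.

Lemma ip0l h : ip 0 h = 0.
Proof.
have E := ipDZ 1 0 0 h; rewrite scaler0 addr0 mul1r in E.
by apply: (addrI (ip 0 h)); rewrite addr0 -E.
Qed.
Lemma ipD f g h : ip (f + g) h = ip f h + ip g h.
Proof. by rewrite -[f]scale1r ipDZ mul1r scale1r. Qed.
Lemma ipZ a f h : ip (a *: f) h = a * ip f h.
Proof. by rewrite -[a *: f]addr0 ipDZ ip0l addr0. Qed.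
Lemma ipN f h : ip (- f) h = - ip f h.
Proof. by rewrite -scaleN1r ipZ mulN1r. Qed.
Lemma ipB f g h : ip (f - g) h = ip f h - ip g h.
Proof. by rewrite ipD ipN. Qed.
Lemma ip_suml (I : Type) (S : seq I) (F : I -> H) h :
  ip (\sum_(l <- S) F l) h = \sum_(l <- S) ip (F l) h.
Proof.
elim: S => [|x S IH]; first by rewrite !big_nil ip0l.
by rewrite !big_cons ipD IH.
Qed.
Lemma ip0r h : ip h 0 = 0.
Proof. by rewrite ipJ ip0l rmorph0. Qed.
Lemma ipDr f g h : ip h (f + g) = ip h f + ip h g.
Proof. by rewrite ipJ ipD rmorphD /= -!ipJ. Qed.
Lemma ipZr a f h : ip h (a *: f) = conjc a * ip h f.
Proof. by rewrite ipJ ipZ rmorphM /= -ipJ. Qed.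
Lemma ipBr f g h : ip h (f - g) = ip h f - ip h g.
Proof. by rewrite ipJ ipB rmorphB /= -!ipJ. Qed.
Lemma ip_sumr (I : Type) (S : seq I) (c : I -> R[i]) (F : I -> H) h :
  ip h (\sum_(l <- S) c l *: F l) = \sum_(l <- S) conjc (c l) * ip h (F l).
Proof.
elim: S => [|x S IH]; first by rewrite !big_nil ip0r.
by rewrite !big_cons ipDr ipZr IH.
Qed.

Lemma ip_real f : ip f f = (complex.Re (ip f f))%:C.
Proof. by have [_ h] := ip_pos f; move: h; case: (ip f f) => a b /= ->. Qed.
Lemma ip_ge0 f : 0 <= ip f f.
Proof. by rewrite ip_real ler0c; case: (ip_pos f). Qed.

Lemma CS_C x y : `|ip x y| ^+ 2 <= ip x x * ip y y.
Proof.
set t := ip x y; set c := ip y y.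
have cJ : conjc c = c by rewrite /c -ipJ.
have [c0|cn0] := eqVneq c 0.
  have y0 : y = 0 by apply: ip_eq0.
  rewrite /t /c; clear t c cJ c0; subst y; by rewrite !ip0r normr0 expr0n /= mulr0.
have cpos : 0 < c by rewrite lt_def cn0 ip_ge0.
pose z := x - (t / c) *: y.
have hz : ip z z = ip x x - t * conjc t / c.
  rewrite /z !(ipB, ipBr, ipZ, ipZr) rmorphM /= fmorphV /=.
  have cJ2 : forall u : R[i], u = c -> conjc u = u by move=> u ->.
  rewrite (cJ2 c) // (ipJ x y) -/t -/c.
  field; exact: cn0.
have := ip_ge0 z; rewrite hz subr_ge0 ler_pdivrMr //.
by rewrite sqr_normc.
Qed.

Definition nH (f : H) := normH ip f.

Lemma nH_ge0 f : 0 <= nH f.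
Proof. exact: sqrtr_ge0. Qed.

Lemma CS x y : cabs (ip x y) <= nH x * nH y.
Proof.
have := CS_C x y; rewrite (ip_real x) (ip_real y) -cabsC -rmorphXn -rmorphM lecR.
move=> h; rewrite /nH /normH -sqrtrM; last by case: (ip_pos x).
by rewrite -(ger0_norm (cabs_ge0 (ip x y))) -sqrtr_sqr ler_wsqrtr.
Qed.
End IP.



Section Lim.
Variable R : realType.
Implicit Types (u v : nat -> R[i]) (a b : R[i]).

Definition cvgC u a := forall eps : R, 0 < eps -> exists N, forall n, (N <= n)%N ->
  cabs (u n - a) < eps.

Lemma cabs_tri a b c : cabs (a - c) <= cabs (a - b) + cabs (b - c).
Proof. by have := cabsD (a - b) (b - c); rewrite addrA subrK. Qed.

Lemma small0 (x : R) : 0 <= x -> (forall e, 0 < e -> x < e) -> x = 0.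
Proof.
move=> x0 h; apply/eqP; rewrite eq_le x0 andbT; rewrite leNgt; apply/negP=> xp.
by have := h x xp; rewrite ltxx.
Qed.

Lemma cvgC_cst a : cvgC (fun _ => a) a.
Proof. by move=> e e0; exists 0%N => n _; rewrite subrr cabs0. Qed.

Lemma cvgC_uniq u a b : cvgC u a -> cvgC u b -> a = b.
Proof.
move=> ha hb; apply/eqP; rewrite -subr_eq0; apply/eqP/cabs_eq0.
apply: small0; first exact: cabs_ge0.
move=> e e0; have e2 : 0 < e / 2 by rewrite divr_gt0.
have [N1 h1] := ha _ e2; have [N2 h2] := hb _ e2.
have := h1 (maxn N1 N2) (leq_maxl _ _); have := h2 (maxn N1 N2) (leq_maxr _ _).
have := cabs_tri a (u (maxn N1 N2)) b; rewrite (cabsB a (u _)).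
move=> h3 h4 h5; apply: (le_lt_trans h3); lra.
Qed.

Lemma cvgC_D u v a b : cvgC u a -> cvgC v b -> cvgC (fun n => u n + v n) (a + b).
Proof.
move=> ha hb e e0; have e2 : 0 < e / 2 by rewrite divr_gt0.
have [N1 h1] := ha _ e2; have [N2 h2] := hb _ e2.
exists (maxn N1 N2) => n hn.
have := h1 n (leq_trans (leq_maxl _ _) hn); have := h2 n (leq_trans (leq_maxr _ _) hn).
have -> : u n + v n - (a + b) = (u n - a) + (v n - b) by ring.
have := cabsD (u n - a) (v n - b); move=> h3 h4 h5; apply: (le_lt_trans h3); lra.
Qed.

Lemma cvgC_M c u a : cvgC u a -> cvgC (fun n => c * u n) (c * a).
Proof.
move=> ha e e0; have c1 : 0 < cabs c + 1 by have := cabs_ge0 c; lra.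
have [N h] := ha _ (divr_gt0 e0 c1); exists N => n hn.
rewrite -mulrBr cabsM; have := h n hn; have := cabs_ge0 c; have := cabs_ge0 (u n - a).
move=> h1 h2 h3; apply: (@le_lt_trans _ _ ((cabs c + 1) * cabs (u n - a))).
  by rewrite ler_wpM2r // lerDl.
by rewrite mulrC -ltr_pdivlMr.
Qed.

Lemma cvgC_ext u v a : (forall n, u n = v n) -> cvgC u a -> cvgC v a.
Proof. by move=> h ha e e0; have [N hN] := ha _ e0; exists N => n hn; rewrite -h; apply: hN. Qed.

Lemma cvgC_sum (I : Type) (S : seq I) (F : I -> nat -> R[i]) (L : I -> R[i]) :
  (forall i, cvgC (F i) (L i)) ->
  cvgC (fun n => \sum_(i <- S) F i n) (\sum_(i <- S) L i).
Proof.
move=> h; elim: S => [|x S IH].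
  rewrite big_nil; apply: (@cvgC_ext (fun _ => 0)); last exact: cvgC_cst.
  by move=> n; rewrite big_nil.
rewrite big_cons; apply: (@cvgC_ext (fun n => F x n + \sum_(i <- S) F i n)).
  by move=> n; rewrite big_cons.
exact: cvgC_D.
Qed.

Lemma cvgC_bound u a (B : R) : (forall n, cabs (u n) <= B) -> cvgC u a -> cabs a <= B.
Proof.
move=> hB ha; apply/ler_addgt0Pr => e e0.
have [N h] := ha _ e0; have := h N (leqnn N); have := hB N.
have := cabs_tri a (u N) 0; rewrite !subr0 cabsB; move=> h1 h2 h3; lra.
Qed.


End Lim.



Section Sup.
Variables (R : realType) (X : countType) (w : X -> R).
Hypothesis hw : forall k, 0 < w k.

Lemma ell_sup a : ell_inf w a -> forall k, cabs (a k) * w k <= norm_ell_inf w a.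
Proof.
move=> [M hM] k; apply: sup_upper_bound; last by exists k.
split; first by exists (cabs (a k) * w k), k.
by exists M => _ [j _ <-].
Qed.

Lemma sup_le_B a (B : R) : 0 <= B -> (forall k, cabs (a k) * w k <= B) ->
  norm_ell_inf w a <= B.
Proof.
move=> B0 hB; rewrite /norm_ell_inf.
have [hs|hns] := pselect (has_sup (range (fun k => cabs (a k) * w k))).
  by apply: ge_sup; [exact: hs.1 | move=> _ [j _ <-]].
by rewrite sup_out.
Qed.

Lemma norm_ell_ge0 a : 0 <= norm_ell_inf w a.
Proof.
rewrite /norm_ell_inf.
have [hs|hns] := pselect (has_sup (range (fun k => cabs (a k) * w k))).
  have [_ [k _ _]] := hs.1.
  apply: (le_trans _ (sup_upper_bound hs (ex_intro2 _ _ k I erefl))).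
  by rewrite mulr_ge0 ?cabs_ge0 // ltW.
by rewrite sup_out.
Qed.

Lemma ell_coord a k : ell_inf w a -> cabs (a k) <= norm_ell_inf w a / w k.
Proof. by move=> ha; rewrite ler_pdivlMr //; exact: ell_sup. Qed.

Lemma ell_infD a b : ell_inf w a -> ell_inf w b -> forall c, ell_inf w (fun k => c * a k + b k).
Proof.
move=> [M1 h1] [M2 h2] c; exists (cabs c * M1 + M2) => k.
apply: le_trans (_ : cabs c * (cabs (a k) * w k) + cabs (b k) * w k <= _).
  rewrite mulrA -cabsM -mulrDl ler_wpM2r ?cabsD //; exact: ltW.
by rewrite lerD // ler_wpM2l ?cabs_ge0.
Qed.

End Sup.

Section Sums.
Variable R : realType.
Lemma cabs_sum (I : Type) (S : seq I) (F : I -> R[i]) :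
  cabs (\sum_(i <- S) F i) <= \sum_(i <- S) cabs (F i).
Proof.
elim: S => [|x S IH]; first by rewrite !big_nil cabs0.
rewrite !big_cons; apply: le_trans (cabsD _ _) _; exact: lerD.
Qed.
End Sums.



Section Pair.
Variables (R : realType) (H : lmodType R[i]) (ip : H -> H -> R[i]).
Hypothesis hip : is_inner_product ip.
Variables (X : countType) (tpsi : X -> H).
Variables (Hb : lmodType R[i]) (iota : H -> Hb) (pair : Hb -> H -> R[i]).
Hypothesis hHb : is_sigma_completion ip tpsi iota pair.

Lemma in_H00_t k : in_H00 tpsi (tpsi k).
Proof. by exists [fset k]%fset, (fun _ => 1); rewrite big_seq_fset1 scale1r. Qed.

Lemma in_H00_comb (S : {fset X}) c : in_H00 tpsi (\sum_(k <- S) c k *: tpsi k).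
Proof. by exists S, c. Qed.

Lemma pairDZ v a F G : in_H00 tpsi v -> pair (a *: F + G) v = a * pair F v + pair G v.
Proof. by case: hHb => _ h _ _ _ hv; apply: h. Qed.

Lemma pair_iota v f : in_H00 tpsi v -> pair (iota f) v = ip f v.
Proof. by case: hHb => _ _ h _ _ hv; apply: h. Qed.

Lemma pair_sep F : (forall v, in_H00 tpsi v -> pair F v = 0) -> F = 0.
Proof. by case: hHb => _ _ _ h _; apply: h. Qed.

Lemma dense F : exists fn : nat -> H, sigma_cvg tpsi pair (fun n => iota (fn n)) F.
Proof. by case: hHb => _ _ _ _ [h _]; exact: h. Qed.

Lemma complete Fn : sigma_cauchy tpsi pair Fn -> exists F, sigma_cvg tpsi pair Fn F.
Proof. by case: hHb => _ _ _ _ [_ h]; exact: h. Qed.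

Lemma iotaDZ a f g : iota (a *: f + g) = a *: iota f + iota g.
Proof. by case: hHb => h _ _ _ _; exact: h. Qed.

Lemma iota0 : iota 0 = 0.
Proof.
have E := iotaDZ 1 0 0; rewrite scaler0 addr0 scale1r in E.
by apply: (addrI (iota 0)); rewrite addr0 -E.
Qed.

Lemma pair0 v : in_H00 tpsi v -> pair 0 v = 0.
Proof.
move=> hv; have E := pairDZ 1 0 0 hv; rewrite scaler0 addr0 mul1r in E.
by apply: (addrI (pair 0 v)); rewrite addr0 -E.
Qed.

Lemma pairZ v a F : in_H00 tpsi v -> pair (a *: F) v = a * pair F v.
Proof. by move=> hv; rewrite -[a *: F]addr0 (pairDZ _ _ _ hv) (pair0 hv) addr0. Qed.

Lemma pairD v F G : in_H00 tpsi v -> pair (F + G) v = pair F v + pair G v.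
Proof. by move=> hv; rewrite -[F]scale1r (pairDZ _ _ _ hv) mul1r scale1r. Qed.

Lemma pairB v F G : in_H00 tpsi v -> pair (F - G) v = pair F v - pair G v.
Proof. by move=> hv; rewrite (pairD _ _ hv) -scaleN1r (pairZ _ _ hv) mulN1r. Qed.

Lemma pair_comb F (S : {fset X}) c :
  pair F (\sum_(k <- S) c k *: tpsi k) = \sum_(k <- S) conjc (c k) * pair F (tpsi k).
Proof.
have [fn hf] := dense F.
have hv := in_H00_comb S c.
apply: (cvgC_uniq (hf _ hv)).
apply: (@cvgC_ext _ (fun n => \sum_(k <- S) conjc (c k) * pair (iota (fn n)) (tpsi k))).
  move=> n; rewrite pair_iota // ip_sumr //.
  by apply: eq_bigr => k _; rewrite pair_iota //; exact: in_H00_t.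
apply: cvgC_sum => k; apply: cvgC_M; apply: hf; exact: in_H00_t.
Qed.

Lemma sigma_cvg_coef Fn F :
  (forall k, cvgC (fun n => pair (Fn n) (tpsi k)) (pair F (tpsi k))) ->
  sigma_cvg tpsi pair Fn F.
Proof.
move=> h v [S [c ->]].
have E : cvgC (fun n => pair (Fn n) (\sum_(k <- S) c k *: tpsi k))
   (pair F (\sum_(k <- S) c k *: tpsi k)).
  rewrite pair_comb.
  apply: (@cvgC_ext _ (fun n => \sum_(k <- S) conjc (c k) * pair (Fn n) (tpsi k))).
    by move=> n; rewrite pair_comb.
  by apply: cvgC_sum => k; apply: cvgC_M.
exact: E.
Qed.

End Pair.



Section Ell.
Variables (R : realType) (X : countType) (w : X -> R).
Hypothesis hw : forall k, 0 < w k.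

Lemma ell_infB a b : ell_inf w a -> ell_inf w b -> ell_inf w (fun k => a k - b k).
Proof.
move=> [M1 h1] [M2 h2]; exists (M1 + M2) => k.
apply: le_trans (_ : cabs (a k) * w k + cabs (b k) * w k <= _); last exact: lerD.
by rewrite -mulrDl ler_wpM2r ?(ltW (hw k)) // -(cabsN (b k)) cabsD.
Qed.

Lemma ell_inf0 : ell_inf w (fun _ => 0).
Proof. by exists 0 => k; rewrite cabs0 mul0r. Qed.
End Ell.

Section Gram.
Variables (R : realType) (H : lmodType R[i]) (ip : H -> H -> R[i]).
Variables (X : countType) (w : X -> R).
Hypothesis hw : forall k, 0 < w k.
Variables (psi tpsi : X -> H).
Hypothesis hG : gram_bounded ip w psi tpsi.

Local Notation G := (gram ip psi tpsi).

Lemma gram_M : exists M : R, 0 <= M /\ forall k (F : {fset X}),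
  \sum_(l <- F) cabs (G k l) * w k / w l <= M.
Proof.
have [M hM] := hG; exists `|M|; split => // k F.
exact: le_trans (hM k F) (ler_norm M).
Qed.

Lemma gram_term_bound (b : X -> R[i]) (D : R) k l :
  cabs (b l) * w l <= D ->
  cabs (G k l * b l) <= D / w k * (cabs (G k l) * w k / w l).
Proof.
move=> hb; have wk := hw k; have wl := hw l.
have hb' : cabs (b l) <= D / w l by rewrite ler_pdivlMr.
rewrite cabsM; apply: le_trans (ler_wpM2l (cabs_ge0 _) hb') _.
rewrite le_eqVlt; apply/orP; left; apply/eqP.
field; apply/andP; split; exact: lt0r_neq0.
Qed.

Lemma gram_sum_bound (b : X -> R[i]) (D : R) (M : R) k (F : {fset X}) :
  (forall k (F : {fset X}), \sum_(l <- F) cabs (G k l) * w k / w l <= M) ->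
  0 <= D -> (forall l, l \in F -> cabs (b l) * w l <= D) ->
  cabs (\sum_(l <- F) G k l * b l) <= D / w k * M.
Proof.
move=> hM D0 hb; apply: le_trans (cabs_sum _ _) _.
apply: le_trans (_ : \sum_(l <- F) D / w k * (cabs (G k l) * w k / w l) <= _).
  rewrite big_seq [leRHS]big_seq; apply: ler_sum => l lF; exact: gram_term_bound (hb l lF).
rewrite -mulr_sumr ler_wpM2l //; first by rewrite divr_ge0 // ltW.
Qed.

Lemma gram_fixed_lin c a b : gram_fixed ip w psi tpsi a -> gram_fixed ip w psi tpsi b ->
  gram_fixed ip w psi tpsi (fun k => c * a k + b k).
Proof.
move=> [ha hau] [hb hbu]; split; first exact: ell_infD.
move=> k e e0.
have c1 : 0 < cabs c + 1 by have := cabs_ge0 c; lra.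
have e2 : 0 < e / 2 / (cabs c + 1) by rewrite !divr_gt0.
have e3 : 0 < e / 2 by rewrite divr_gt0.
have [F1 h1] := hau k _ e2; have [F2 h2] := hbu k _ e3.
exists (F1 `|` F2)%fset => F hF.
have hF1 := h1 F (fsubset_trans (fsubsetUl _ _) hF).
have hF2 := h2 F (fsubset_trans (fsubsetUr _ _) hF).
have -> : c * a k + b k - \sum_(l <- F) G k l * (c * a l + b l) =
   c * (a k - \sum_(l <- F) G k l * a l) + (b k - \sum_(l <- F) G k l * b l).
  have -> : \sum_(l <- F) G k l * (c * a l + b l) =
     c * \sum_(l <- F) G k l * a l + \sum_(l <- F) G k l * b l.
    by rewrite mulr_sumr -big_split; apply: eq_bigr => l _ /=; ring.
  ring.
apply: le_lt_trans (cabsD _ _) _; rewrite cabsM.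
have : cabs c * cabs (a k - \sum_(l <- F) G k l * a l) <= (cabs c + 1) * (e / 2 / (cabs c + 1)).
  apply: le_trans (_ : (cabs c + 1) * cabs (a k - \sum_(l <- F) G k l * a l) <= _).
    by rewrite ler_wpM2r ?cabs_ge0 // lerDl.
  by rewrite ler_wpM2l ?(ltW c1) // ltW.
rewrite [(cabs c + 1) * _]mulrC divfK ?lt0r_neq0 //; move=> h; lra.
Qed.

Lemma gram_fixed0 : gram_fixed ip w psi tpsi (fun _ => 0).
Proof.
split; first exact: ell_inf0.
move=> k e e0; exists fset0 => F _.
by rewrite big1 ?subrr ?cabs0 // => l _; rewrite mulr0.
Qed.

Lemma gram_fixed_closed (an : nat -> X -> R[i]) (a : X -> R[i]) :
  (forall n, gram_fixed ip w psi tpsi (an n)) -> ell_inf w a ->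
  (forall eps : R, 0 < eps -> exists N, forall n, (N <= n)%N ->
     norm_ell_inf w (fun k => an n k - a k) < eps) ->
  gram_fixed ip w psi tpsi a.
Proof.
move=> han ha hc; split => // k e e0.
have [M [M0 hM]] := gram_M.
have wk := hw k.
have M1 : 0 < 1 + M by lra.
have e2 : 0 < e / 2 by rewrite divr_gt0.
have d0 : 0 < e / 2 * w k / (1 + M) by rewrite divr_gt0 // mulr_gt0.
have [N hN] := hc _ d0; have hD := hN N (leqnn N).
set D := norm_ell_inf w _ in hD.
have [hanN hanu] := han N.
have hdiff := ell_infB hw hanN ha.
have D0 : 0 <= D by exact: norm_ell_ge0.
have [F0 h0] := hanu k _ e2; exists F0 => F hF.
have h1 := h0 F hF.
have h2 : cabs (an N k - a k) <= D / w k by exact: ell_coord.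
have h3 : cabs (\sum_(l <- F) G k l * (an N l - a l)) <= D / w k * M.
  by apply: gram_sum_bound => // l _; exact: ell_sup.
have -> : a k - \sum_(l <- F) G k l * a l =
  - (an N k - a k) + (an N k - \sum_(l <- F) G k l * an N l) +
    \sum_(l <- F) G k l * (an N l - a l).
  have -> : \sum_(l <- F) G k l * (an N l - a l) =
     \sum_(l <- F) G k l * an N l - \sum_(l <- F) G k l * a l.
    by rewrite -sumrB; apply: eq_bigr => l _ /=; ring.
  ring.
apply: le_lt_trans (cabsD _ _) _; apply: le_lt_trans (lerD (cabsD _ _) (lexx _)) _.
rewrite cabsN.
have hD' : D / w k * (1 + M) < e / 2.
  by rewrite mulrAC ltr_pdivrMr // -ltr_pdivlMr.
move: hD'; rewrite mulrDr mulr1; move=> hD'; lra.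
Qed.

Lemma partA : closed_subspace_ell_inf w (gram_fixed ip w psi tpsi).
Proof.
split.
- by move=> a [].
- exact: gram_fixed0.
- by move=> c a b; exact: gram_fixed_lin.
- by move=> an a han ha hc; exact: gram_fixed_closed hc.
Qed.
End Gram.



Section Tail.
Variables (R : realType) (X : countType) (t : X -> R).
Hypothesis t0 : forall l, 0 <= t l.
Hypothesis tM : exists M, forall F : {fset X}, \sum_(l <- F) t l <= M.

Lemma tail_small (d : R) : 0 < d -> exists F1 : {fset X}, forall S : {fset X},
  \sum_(l <- [fset x in S | x \notin F1]%fset) t l < d.
Proof.
move=> d0; have [M hM] := tM.
pose E : set R := fun x => exists F : {fset X}, x = \sum_(l <- F) t l.
have hs : has_sup E.
  split; first by exists 0, fset0; rewrite big_seq_fset0.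
  by exists M => _ [F ->].
have [_ [F1 ->] hF1] := sup_adherent d0 hs.
exists F1 => S.
set T := [fset x in S | x \notin F1]%fset.
have hU : \sum_(l <- (T `|` F1)%fset) t l <= sup E.
  by apply: sup_upper_bound => //; exists (T `|` F1)%fset.
rewrite (big_fsetID _ (mem F1)) /= in hU.
have e1 : \sum_(i <- [fset x in (T `|` F1)%fset | x \in F1]%fset) t i = \sum_(i <- F1) t i.
  apply: eq_fbigl => x; rewrite !inE /=; case: (x \in F1); rewrite ?orbT ?andbF //.
have e2 : \sum_(i <- [fset x in (T `|` F1)%fset | x \notin F1]%fset) t i = \sum_(i <- T) t i.
  apply: eq_fbigl => x; rewrite !inE /=; case: (x \in F1); rewrite ?orbT ?orbF ?andbT ?andbF //.
rewrite e1 e2 in hU; lra.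
Qed.
End Tail.

Section Fin.
Variable R : realType.
Lemma cvgC_fin (I : eqType) (s : seq I) (u : I -> nat -> R[i]) (a : I -> R[i]) (e : I -> R) :
  (forall i, 0 < e i) -> (forall i, cvgC (u i) (a i)) ->
  exists N, forall n, (N <= n)%N -> forall i, i \in s -> cabs (u i n - a i) < e i.
Proof.
move=> he hc; elim: s => [|x s [N2 h2]]; first by exists 0%N.
have [N1 h1] := hc x _ (he x).
exists (maxn N1 N2) => n hn i; rewrite inE => /orP[/eqP ->|his].
  exact: h1 (leq_trans (leq_maxl _ _) hn).
exact: h2 (leq_trans (leq_maxr _ _) hn) _ his.
Qed.
End Fin.

Section FixedLimit.
Variables (R : realType) (H : lmodType R[i]) (ip : H -> H -> R[i]).
Variables (X : countType) (w : X -> R).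
Hypothesis hw : forall k, 0 < w k.
Variables (psi tpsi : X -> H).
Hypothesis hG : gram_bounded ip w psi tpsi.
Local Notation G := (gram ip psi tpsi).

Lemma fixed_limit (bn : nat -> X -> R[i]) (a : X -> R[i]) (B : R) :
  (forall n k, cabs (bn n k) * w k <= B) ->
  (forall k, cvgC (fun n => bn n k) (a k)) ->
  (forall n k, uncond_sum (@cabs R) (fun l => G k l * bn n l) (bn n k)) ->
  forall k, uncond_sum (@cabs R) (fun l => G k l * a l) (a k).
Proof.
move=> hB hcv hfix k eps e0.
have [M [M0 hM]] := gram_M hG.
set B' := `|B|.
have hB' : forall n l, cabs (bn n l) * w l <= B' by move=> n l; exact: le_trans (hB n l) (ler_norm B).
have ha : forall l, cabs (a l) * w l <= B'.
  move=> l; rewrite -ler_pdivlMr //; apply: (cvgC_bound _ (hcv l)) => n.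
  by rewrite ler_pdivlMr.
have hd : forall n l, cabs (bn n l - a l) * w l <= B' + B'.
  move=> n l; apply: le_trans (_ : (cabs (bn n l) + cabs (a l)) * w l <= _).
    apply: ler_wpM2r; [exact: ltW | by have := cabsD (bn n l) (- a l); rewrite cabsN].

  by rewrite mulrDl lerD.
have wk := hw k.
have B'0 : 0 <= B' by rewrite /B' normr_ge0.
set r := (B' + B') / w k.
have r0 : 0 <= r by rewrite divr_ge0 ?addr_ge0 // ltW.
have M1 : 0 < 1 + M by lra.
set q := eps / 4 / (1 + M).
have q0 : 0 < q by rewrite !divr_gt0.
have qM : q + q * M = eps / 4 by rewrite /q; field; rewrite lt0r_neq0.
have r1 : 0 < r + 1 by lra.
set d := eps / 4 / (r + 1).
have d0 : 0 < d by rewrite !divr_gt0.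
have rd : r * d + d = eps / 4 by rewrite /d; field; rewrite lt0r_neq0.
pose t l := cabs (G k l) * w k / w l.
have t0 : forall l, 0 <= t l by move=> l; rewrite /t divr_ge0 ?mulr_ge0 ?cabs_ge0 // ltW.
have [F1 hF1] := @tail_small R X t (ex_intro _ M (hM k)) _ d0.
have [N hN] := @cvgC_fin R X (k :: F1) (fun l n => bn n l) a (fun l => q * w k / w l)
  (fun l => divr_gt0 (mulr_gt0 q0 wk) (hw l)) hcv.
have hm := hN N (leqnn N).
have e4 : 0 < eps / 4 by rewrite divr_gt0.
have [F0 h0] := hfix N k _ e4.
exists (F0 `|` F1)%fset => S hS.
have h2 := h0 S (fsubset_trans (fsubsetUl _ _) hS).
have h1 : cabs (bn N k - a k) < q.
  by have := hm k (mem_head _ _); rewrite mulfK ?lt0r_neq0.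
set T1 := [fset x in S | x \in F1]%fset.
set T2 := [fset x in S | x \notin F1]%fset.
have hsplit : \sum_(l <- S) G k l * (bn N l - a l) =
   \sum_(l <- T1) G k l * (bn N l - a l) + \sum_(l <- T2) G k l * (bn N l - a l).
  by rewrite (big_fsetID _ (mem F1)).
have h3 : cabs (\sum_(l <- T1) G k l * (bn N l - a l)) <= q * M.
  have := @gram_sum_bound R H ip X w hw psi tpsi (fun l => bn N l - a l) (q * w k) M k T1 hM.
  rewrite mulfK ?lt0r_neq0 //; apply; first by rewrite mulr_ge0 // ltW.
  move=> l; rewrite !inE /= => /andP[_ lF1].
  have := hm l; rewrite inE lF1 orbT => /(_ isT) h.
  by rewrite -ler_pdivlMr // ltW.
have h4 : cabs (\sum_(l <- T2) G k l * (bn N l - a l)) <= r * d.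
  apply: le_trans (cabs_sum _ _) _.
  apply: le_trans (_ : \sum_(l <- T2) r * t l <= _).
    by apply: ler_sum => l _; exact: (@gram_term_bound _ _ ip _ _ hw psi tpsi (fun l => bn N l - a l) (B' + B') k l (hd N l)).
  rewrite -mulr_sumr; apply: ler_wpM2l => //; exact: ltW (hF1 S).
have -> : a k - \sum_(l <- S) G k l * a l =
   - (bn N k - a k) + (bn N k - \sum_(l <- S) G k l * bn N l) +
   (\sum_(l <- T1) G k l * (bn N l - a l) + \sum_(l <- T2) G k l * (bn N l - a l)).
  rewrite -hsplit.
  have -> : \sum_(l <- S) G k l * (bn N l - a l) =
     \sum_(l <- S) G k l * bn N l - \sum_(l <- S) G k l * a l.
    by rewrite -sumrB; apply: eq_bigr => l _ /=; ring.
  ring.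
apply: le_lt_trans (cabsD _ _) _.
apply: le_lt_trans (lerD (cabsD _ _) (cabsD _ _)) _.
rewrite cabsN; lra.
Qed.
End FixedLimit.



Section FixedH.
Variables (R : realType) (H : lmodType R[i]) (ip : H -> H -> R[i]).
Hypothesis hip : is_inner_product ip.
Variables (X : countType) (psi tpsi : X -> H).
Hypothesis hdual : is_dual_frame ip psi tpsi.

Lemma fixed_H f k :
  uncond_sum (@cabs R) (fun l => gram ip psi tpsi k l * ip f (tpsi l)) (ip f (tpsi k)).
Proof.
move=> e e0; have [hrec _] := hdual.2 f.
have c0 : 0 < nH ip (tpsi k) + 1 by have := nH_ge0 ip (tpsi k); lra.
have [F0 h0] := hrec (e / (nH ip (tpsi k) + 1)) (divr_gt0 e0 c0).
exists F0 => F hF.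
have key : ip f (tpsi k) - \sum_(l <- F) gram ip psi tpsi k l * ip f (tpsi l) =
   ip (f - \sum_(l <- F) ip f (tpsi l) *: psi l) (tpsi k).
  rewrite ipB // ip_suml //; congr (_ - _); apply: eq_bigr => l _.
  by rewrite ipZ // /gram mulrC.
rewrite key; apply: le_lt_trans (CS hip _ _) _.
have h := h0 F hF; rewrite -/(nH ip _) in h.
have hn := nH_ge0 ip (tpsi k).
have hf := nH_ge0 ip (f - \sum_(l <- F) ip f (tpsi l) *: psi l).
apply: le_lt_trans (_ : _ <= nH ip (f - \sum_(l <- F) ip f (tpsi l) *: psi l) * (nH ip (tpsi k) + 1)) _.
  by apply: ler_wpM2l => //; lra.
by rewrite -ltr_pdivlMr.
Qed.
End FixedH.

Section Misc.
Variable R : realType.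
Lemma cvgC_bound_ev (u : nat -> R[i]) a (B : R) (N : nat) :
  (forall n, (N <= n)%N -> cabs (u n) <= B) -> cvgC u a -> cabs a <= B.
Proof.
move=> hB ha; apply/ler_addgt0Pr => e e0.
have [N' h] := ha _ e0; have := h (maxn N N') (leq_maxr _ _).
have := hB (maxn N N') (leq_maxl _ _).
have := cabs_tri a (u (maxn N N')) 0; rewrite !subr0 cabsB; move=> h1 h2 h3; lra.
Qed.

Variables (X : countType) (w : X -> R).
Hypothesis hw : forall k, 0 < w k.

Lemma ell_infZ c a : ell_inf w a -> ell_inf w (fun k => c * a k).
Proof.
move=> [M hM]; exists (cabs c * M) => k; rewrite cabsM -mulrA.
by apply: ler_wpM2l; [exact: cabs_ge0 | exact: hM].
Qed.

Lemma norm_ellZ c a : ell_inf w a ->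
  norm_ell_inf w (fun k => c * a k) = cabs c * norm_ell_inf w a.
Proof.
move=> ha; have hca := ell_infZ c ha.
apply/eqP; rewrite eq_le; apply/andP; split.
  apply: sup_le_B; first by rewrite mulr_ge0 ?cabs_ge0 ?norm_ell_ge0.
  by move=> k; rewrite cabsM -mulrA ler_wpM2l ?cabs_ge0 ?ell_sup.
have [->|cn0] := eqVneq c 0; first by rewrite cabs0 mul0r norm_ell_ge0.
have cp : 0 < cabs c.
  rewrite lt_def cabs_ge0 andbT; apply/eqP => h; move/eqP: cn0; apply; exact: cabs_eq0.
rewrite mulrC -ler_pdivlMr //; apply: sup_le_B.
  by rewrite divr_ge0 ?norm_ell_ge0 // ltW.
move=> k; rewrite ler_pdivlMr // mulrAC -cabsM mulrC.
by rewrite mulrC [a k * c]mulrC; exact: ell_sup hca k.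
Qed.

Lemma norm_ellD a b : ell_inf w a -> ell_inf w b ->
  norm_ell_inf w (fun k => a k + b k) <= norm_ell_inf w a + norm_ell_inf w b.
Proof.
move=> ha hb; apply: sup_le_B; first by rewrite addr_ge0 ?norm_ell_ge0.
move=> k; apply: le_trans (_ : (cabs (a k) + cabs (b k)) * w k <= _).
  by apply: ler_wpM2r; [exact: ltW | exact: cabsD].
by rewrite mulrDl lerD ?ell_sup.
Qed.

Definition exh (N : nat) : {fset X} := seq_fset tt (pmap (@choice.unpickle X) (iota 0 N)).

Lemma exh_incl (F0 : {fset X}) : exists N0, forall N, (N0 <= N)%N -> fsubset F0 (exh N).
Proof.
exists (\max_(x <- F0) (choice.pickle x).+1)%N => N hN.
apply/fsubsetP => x xF0; rewrite /exh seq_fsetE mem_pmap.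
apply/mapP; exists (choice.pickle x); last by rewrite choice.pickleK.
rewrite mem_iota add0n /=; apply: leq_trans hN.
by rewrite (big_rem x) //= leq_maxl.
Qed.
End Misc.



Section HinfS.
Variables (R : realType) (H : lmodType R[i]) (ip : H -> H -> R[i]).
Hypothesis hip : is_inner_product ip.
Variables (X : countType) (w : X -> R).
Hypothesis hw : forall k, 0 < w k.
Variables (psi tpsi : X -> H).
Hypothesis hdual : is_dual_frame ip psi tpsi.
Hypothesis hG : gram_bounded ip w psi tpsi.
Variables (Hb : lmodType R[i]) (iota : H -> Hb) (pair : Hb -> H -> R[i]).
Hypothesis hHb : is_sigma_completion ip tpsi iota pair.

Local Notation Hi := (Hinf ip tpsi iota pair w).
Local Notation coef := (coef_tpsi tpsi pair).
Local Notation nrm := (norm_Hinf tpsi pair w).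

Lemma cvgC_subl (u : nat -> R[i]) a c : cvgC u a -> cvgC (fun m => c - u m) (c - a).
Proof.
move=> h; have := cvgC_D (cvgC_cst c) (cvgC_M (-1) h).
rewrite mulN1r; apply: cvgC_ext => n; by rewrite mulN1r.
Qed.

Lemma cabs_le_sub (x y : R[i]) : cabs y <= cabs x + cabs (x - y).
Proof. by have := cabs_tri y x 0; rewrite !subr0 cabsB addrC. Qed.

Lemma coef_iota f k : coef (iota f) k = ip f (tpsi k).
Proof. exact: (pair_iota hHb _ (in_H00_t tpsi k)). Qed.

Lemma coefDZ a F G k : coef (a *: F + G) k = a * coef F k + coef G k.
Proof. exact: (pairDZ hHb _ _ _ (in_H00_t tpsi k)). Qed.

Lemma coefB F G k : coef (F - G) k = coef F k - coef G k.
Proof. exact: (pairB hHb _ _ (in_H00_t tpsi k)). Qed.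

Lemma coefZ a F k : coef (a *: F) k = a * coef F k.
Proof. exact: (pairZ hHb _ _ (in_H00_t tpsi k)). Qed.

Lemma Hinf_ell F : Hi F -> ell_inf w (coef F).
Proof.
move=> [fn [hc [M hM]]]; exists M => k; rewrite -ler_pdivlMr //.
apply: (cvgC_bound _ (hc _ (in_H00_t tpsi k))) => n.
by rewrite (pair_iota hHb _ (in_H00_t tpsi k)) ler_pdivlMr.
Qed.

Lemma Hinf_fixed F : Hi F -> gram_fixed ip w psi tpsi (coef F).
Proof.
move=> hF; split; first exact: Hinf_ell.
move: hF => [fn [hc [M hM]]].
apply: (fixed_limit hw hG (bn := fun n k => ip (fn n) (tpsi k)) (B := M)) => //.
  move=> k; apply: cvgC_ext (hc _ (in_H00_t tpsi k)) => n.
  exact: (pair_iota hHb _ (in_H00_t tpsi k)).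
by move=> n k; exact: fixed_H.
Qed.

Lemma Hinf0 : Hi 0.
Proof.
exists (fun _ => 0); split.
  move=> v hv e e0; exists 0%N => n _; by rewrite (iota0 hHb) subrr cabs0.
by exists 0 => n k; rewrite ip0l // cabs0 mul0r.
Qed.

Lemma HinfDZ a F G : Hi F -> Hi G -> Hi (a *: F + G).
Proof.
move=> [fn [hf [M1 h1]]] [gn [hg [M2 h2]]].
exists (fun n => a *: fn n + gn n); split.
  move=> v hv.
  have E : cvgC (fun n => pair (iota (a *: fn n + gn n)) v) (pair (a *: F + G) v).
    rewrite (pairDZ hHb _ _ _ hv).
    apply: (cvgC_ext (u := fun n => a * pair (iota (fn n)) v + pair (iota (gn n)) v)).
      by move=> n; rewrite (iotaDZ hHb) (pairDZ hHb _ _ _ hv).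
    by apply: cvgC_D; [apply: cvgC_M; exact: hf | exact: hg].
  exact: E.
exists (cabs a * M1 + M2) => n k; rewrite ipDZ //.
apply: le_trans (_ : cabs a * (cabs (ip (fn n) (tpsi k)) * w k) + cabs (ip (gn n) (tpsi k)) * w k <= _).
  rewrite mulrA -cabsM -mulrDl; apply: ler_wpM2r; [exact: ltW | exact: cabsD].
by rewrite lerD // ler_wpM2l ?cabs_ge0.
Qed.

Lemma HinfB F G : Hi F -> Hi G -> Hi (F - G).
Proof. by move=> hF hG'; rewrite addrC -scaleN1r; exact: HinfDZ. Qed.

Lemma nrmE F : nrm F = norm_ell_inf w (fun k => coef F k).
Proof. by []. Qed.

Lemma nrm_zero F : Hi F -> nrm F = 0 -> F = 0.
Proof.
move=> hF h0; have he := Hinf_ell hF.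
have c0 : forall k, coef F k = 0.
  move=> k; apply: cabs_eq0; have h3 := ell_sup he k.
  rewrite -/(norm_Hinf _ _ _ F) h0 in h3.
  have : cabs (coef F k) * w k = 0.
    by apply/eqP; rewrite eq_le h3 mulr_ge0 // ?cabs_ge0 ?ltW.
  by move/eqP; rewrite mulf_eq0 (gt_eqF (hw k)) orbF => /eqP.
apply: (@pair_sep _ _ ip _ tpsi _ iota pair hHb) => v [S [c ->]].
rewrite (pair_comb hip hHb); apply: big1 => k _.
by have := c0 k; rewrite /coef_tpsi => ->; rewrite mulr0.
Qed.

Lemma nrm_homog a F : Hi F -> nrm (a *: F) = cabs a * nrm F.
Proof.
move=> hF; rewrite !nrmE -(norm_ellZ hw a (Hinf_ell hF)).
by congr norm_ell_inf; apply: funext => k; rewrite coefZ.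
Qed.

Lemma nrm_tri F G : Hi F -> Hi G -> nrm (F + G) <= nrm F + nrm G.
Proof.
move=> hF hG'; rewrite !nrmE.
have -> : (fun k => coef (F + G) k) = (fun k => coef F k + coef G k).
  by apply: funext => k; have := coefDZ 1 F G k; rewrite scale1r mul1r.
apply: (norm_ellD hw); exact: Hinf_ell.
Qed.
End HinfS.



Section HinfS.
Variables (R : realType) (H : lmodType R[i]) (ip : H -> H -> R[i]).
Hypothesis hip : is_inner_product ip.
Variables (X : countType) (w : X -> R).
Hypothesis hw : forall k, 0 < w k.
Variables (psi tpsi : X -> H).
Hypothesis hdual : is_dual_frame ip psi tpsi.
Hypothesis hG : gram_bounded ip w psi tpsi.
Variables (Hb : lmodType R[i]) (iota : H -> Hb) (pair : Hb -> H -> R[i]).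
Hypothesis hHb : is_sigma_completion ip tpsi iota pair.

Local Notation Hi := (Hinf ip tpsi iota pair w).
Local Notation coef := (coef_tpsi tpsi pair).
Local Notation nrm := (norm_Hinf tpsi pair w).


Lemma Hinf_complete (fn : nat -> Hb) : (forall n, Hi (fn n)) ->
  (forall eps : R, 0 < eps -> exists N, forall n m, (N <= n)%N -> (N <= m)%N ->
      nrm (fn n - fn m) < eps) ->
  exists F, Hi F /\ forall eps : R, 0 < eps -> exists N, forall n, (N <= n)%N ->
      nrm (fn n - F) < eps.
Proof.
move=> hfn hc.
have hdiff : forall n m k, cabs (coef (fn n) k - coef (fn m) k) <= nrm (fn n - fn m) / w k.
  move=> n m k; have := ell_coord hw k (Hinf_ell hw hHb (HinfB hip hw hHb (hfn n) (hfn m))).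
  by rewrite (coefB hHb).
have hcau : sigma_cauchy tpsi pair fn.
  move=> v [S [c ->]] e e0.
  set K := \sum_(l <- S) cabs (c l) / w l.
  have K0 : 0 <= K by apply: sumr_ge0 => l _; rewrite divr_ge0 ?cabs_ge0 // ltW.
  have K1 : 0 < K + 1 by lra.
  have [N hN] := hc (e / (K + 1)) (divr_gt0 e0 K1).
  exists N => n m hn hm.
  rewrite !(pair_comb hip hHb) -sumrB.
  set D := nrm (fn n - fn m).
  have hD : D < e / (K + 1) by exact: hN.
  have D0 : 0 <= D by exact: norm_ell_ge0.
  apply: le_lt_trans (cabs_sum _ _) _.
  apply: (@le_lt_trans _ _ (\sum_(l <- S) D * (cabs (c l) / w l))).
    apply: ler_sum => l _; rewrite -mulrBr cabsM cabsJ mulrCA mulrC.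
    rewrite mulrC; apply: ler_wpM2l; [exact: cabs_ge0 | exact: hdiff].
  rewrite -mulr_sumr -/K.
  have : D * (K + 1) < e by rewrite -ltr_pdivlMr.
  rewrite mulrDr mulr1 => h; nra.
have [F hF] := complete hHb hcau.
have hck : forall k, cvgC (fun n => coef (fn n) k) (coef F k).
  by move=> k; exact: hF _ (in_H00_t tpsi k).
have hpt : forall e, 0 < e -> exists N, forall n, (N <= n)%N -> forall k,
    cabs (coef (fn n) k - coef F k) * w k <= e.
  move=> e e0; have [N hN] := hc e e0; exists N => n hn k.
  rewrite -ler_pdivlMr //.
  apply: (cvgC_bound_ev (u := fun m => coef (fn n) k - coef (fn m) k) (N := N)).
    move=> m hm; apply: le_trans (hdiff n m k) _.
    apply: ler_wpM2r; [by rewrite invr_ge0 ltW | exact: ltW (hN n m hn hm)].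
  exact: cvgC_subl.
have hnorm : forall e, 0 < e -> exists N, forall n, (N <= n)%N ->
    norm_ell_inf w (fun k => coef (fn n) k - coef F k) <= e.
  move=> e e0; have [N hN] := hpt e e0; exists N => n hn.
  by apply: sup_le_B; [exact: ltW | exact: hN].
have Fell : ell_inf w (coef F).
  have [N hN] := hpt 1 ltr01.
  have [M hM] := Hinf_ell hw hHb (hfn N).
  exists (M + 1) => k.
  apply: le_trans (_ : (cabs (coef (fn N) k) + cabs (coef (fn N) k - coef F k)) * w k <= _).
    by apply: ler_wpM2r; [exact: ltW | exact: cabs_le_sub].
  by rewrite mulrDl lerD // hN.
have Ffix : gram_fixed ip w psi tpsi (coef F).
  apply: (gram_fixed_closed hw hG (an := fun n => coef (fn n))) => //.
    by move=> n; exact: (Hinf_fixed hip hw hdual hG hHb).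
  move=> e e0; have [N hN] := hnorm (e / 2) (divr_gt0 e0 (ltr0Sn _ 1)).
  exists N => n hn; apply: le_lt_trans (hN n hn) _; lra.
have FHinf : Hi F.
  have [M [M0 hM]] := gram_M hG.
  exists (fun N => \sum_(l <- exh X N) coef F l *: psi l); split.
    apply: (sigma_cvg_coef hip hHb) => k.
    apply: (cvgC_ext (u := fun N => \sum_(l <- exh X N) gram ip psi tpsi k l * coef F l)).
      move=> N; rewrite (pair_iota hHb _ (in_H00_t tpsi k)) ip_suml //.
      by apply: eq_bigr => l _; rewrite ipZ // /gram mulrC.
    move=> e e0; have [F0 h0] := Ffix.2 k e e0; have [N0 hN0] := exh_incl F0.
    by exists N0 => N hN; rewrite cabsB; exact: h0 _ (hN0 N hN).
  exists (norm_ell_inf w (coef F) * M) => N k.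
  rewrite ip_suml //.
  have -> : \sum_(l <- exh X N) ip (coef F l *: psi l) (tpsi k) =
      \sum_(l <- exh X N) gram ip psi tpsi k l * coef F l.
    by apply: eq_bigr => l _; rewrite ipZ // /gram mulrC.
  have := gram_sum_bound hw (b := coef F) k (F := exh X N) hM (norm_ell_ge0 _ _)
     (fun l _ => ell_sup Fell l).
  move=> /(_ hw) h; rewrite -ler_pdivlMr //; by rewrite mulrAC in h.
exists F; split => // e e0.
have [N hN] := hnorm (e / 2) (divr_gt0 e0 (ltr0Sn _ 1)).
exists N => n hn; rewrite nrmE.
have -> : (fun k => coef (fn n - F) k) = (fun k => coef (fn n) k - coef F k).
  by apply: funext => k; rewrite (coefB hHb).
apply: le_lt_trans (hN n hn) _; lra.
Qed.
End HinfS.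


Local Close Scope complex_scope.

Theorem mainTheorem10
  (R : realType) (H : lmodType R[i]) (ip : H -> H -> R[i])
  (hip : is_inner_product ip) (hcomplete : hilbert_complete ip)
  (hsep : hilbert_separable ip)
  (X : countType) (w : X -> R) (hw : forall k, 0 < w k)
  (psi tpsi : X -> H)
  (hframe : is_frame ip psi) (hdual : is_dual_frame ip psi tpsi)
  (hG : gram_bounded ip w psi tpsi)
  (Hb : lmodType R[i]) (iota : H -> Hb) (pair : Hb -> H -> R[i])
  (hHb : is_sigma_completion ip tpsi iota pair) :
  closed_subspace_ell_inf w (gram_fixed ip w psi tpsi)
  /\ (forall F, Hinf ip tpsi iota pair w F -> ell_inf w (coef_tpsi tpsi pair F))
  /\ banach_subspace (Hinf ip tpsi iota pair w) (norm_Hinf tpsi pair w).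
Proof.
split; first by have := partA hw hG; apply.
split; first by move=> F; have := Hinf_ell hw hHb (F := F); apply.
split.
- by have := Hinf0 hip w hHb; apply.
- by move=> a f g hf hg; have := HinfDZ hip hw hHb a hf hg; apply.
- split.
    by move=> f hf h0; have := nrm_zero hip hw hHb hf h0; apply.
  by move=> a f hf; have := nrm_homog hw hHb a hf; apply.
- by move=> f g hf hg; have := nrm_tri hw hHb hf hg; apply.
- move=> fn hfn hc.
  have [F [hF hconv]] := Hinf_complete hip hw hdual hG hHb hfn hc.
  by exists F.
Qed.
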